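(* Let $n\ge 3$ and $1\le i\le n-2$ be integers, and let $\mathcal{A}=\{A_1,\dots,A_n\}$ with $A_1=\dots=A_i=[n]$, $A_{i+1}=\dots=A_{n-1}=[n]\setminus[i]$, $A_n=[n]$. Let $$A=\{\log(x_{j_1}x_{j_2}\cdots x_{j_n}) \mid j_k\in A_k \text{ for all } 1\le k\le n\}\subset\mathbb{N}^n$$ be the exponent set of the monomial generators of $K[\mathcal{A}]$. Then the cone $\mathbb{R}_+A$ has dimension $n$ and has the irreducible representation $$\mathbb{R}_+A=\bigcap_{a\in N}H_a^+,\qquad N=\{\nu_{[i]}\}\cup\{e_1,\dots,e_n\},$$ where $\nu_{[i]}=(-(n-i-1),\dots,-(n-i-1),\,i+1,\dots,i+1)\in\mathbb{Z}^n$ has its first $i$ entries equal to $-(n-i-1)$ and its last $n-i$ entries equal to $i+1$. Equivalently, $\mathbb{R}_+A=\{x\in\mathbb{R}^n \mid x_k\ge 0 \text{ for all } k,\ -(n-i-1)\sum_{k=1}^i x_k+(i+1)\sum_{k=i+1}^n x_k\ge 0\}$, and none of these $n+1$ half-spaces can be omitted. *)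

(* Defs.v *)
(* Indices 1..n of the paper are 'I_n = {0..n-1} here. *)
From HB Require Import structures.
From mathcomp Require Import all_boot all_order all_algebra.
Unset Strict Implicit. Unset Printing Implicit Defensive.
Import Order.TTheory GRing.Theory Num.Theory.
Local Open Scope ring_scope.

(* A choice sequence (j_1,...,j_n) is a function f : 'I_n -> 'I_n (k |-> j_k).
   It is admissible iff j_k \in A_k for all k, where (0-based)
   A_k = [n] for k < i and for k = n-1, and A_k = [n] \ [i] for i <= k < n-1. *)
Definition adm (n i : nat) (f : {ffun 'I_n -> 'I_n}) : bool :=
  [forall k : 'I_n, ((i <= k)%N && (k < n.-1)%N) ==> (i <= f k)%N].

(* log(x_{j_1} ... x_{j_n}) : the exponent vector, whose j-th entry is the
   number of positions k with j_k = j. *)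
Definition expvec (R : realFieldType) (n : nat) (f : {ffun 'I_n -> 'I_n}) : 'rV[R]_n :=
  \row_(j < n) (#|[set k | f k == j]|)%:R.

Definition in_cone (R : realFieldType) (n i : nat) (x : 'rV[R]_n) : Prop :=
  exists c : {ffun {ffun 'I_n -> 'I_n} -> R},
    (forall f, 0 <= c f) /\
    x = \sum_(f | adm n i f) c f *: expvec R n f.

(* The linear span of A (= linear span of the cone R_+ A); its rank is the
   dimension of the cone. *)
Definition cone_span (R : realFieldType) (n i : nat) :=
  (\sum_(f | adm n i f) <<expvec R n f>>)%MS.

Definition nu (R : realFieldType) (n i : nat) : 'rV[R]_n :=
  \row_(j < n) (if (j < i)%N then - ((n - i - 1)%N%:R) else (i + 1)%N%:R).

Definition normals (R : realFieldType) (n i : nat) (t : option 'I_n) : 'rV[R]_n :=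
  match t with
  | None => nu R n i
  | Some k => delta_mx 0 k
  end.

Definition halfspace (R : realFieldType) (n : nat) (a x : 'rV[R]_n) : Prop :=
  0 <= \sum_(j < n) a 0 j * x 0 j.

(* Main.v *)
Require Import Defs.
From HB Require Import structures.
From Stdlib Require Import Lia.
From mathcomp Require Import all_boot all_order all_algebra.
Import Order.TTheory GRing.Theory Num.Theory.
Set Implicit Arguments.
Local Open Scope ring_scope.


Definition dot {R : realFieldType} {n : nat} (a x : 'rV[R]_n) : R :=
  \sum_(j < n) a 0 j * x 0 j.

Lemma dotC (R : realFieldType) n (a x : 'rV[R]_n) : dot a x = dot x a.
Proof. by apply: eq_bigr => j _; rewrite mulrC. Qed.

Lemma dotD (R : realFieldType) n (a x y : 'rV[R]_n) : dot a (x + y) = dot a x + dot a y.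
Proof. by rewrite /dot -big_split; apply: eq_bigr => j _; rewrite mxE mulrDr. Qed.

Lemma dotZ (R : realFieldType) n (a x : 'rV[R]_n) c : dot a (c *: x) = c * dot a x.
Proof. by rewrite /dot mulr_sumr; apply: eq_bigr => j _; rewrite mxE mulrCA. Qed.

Lemma dotN (R : realFieldType) n (a x : 'rV[R]_n) : dot a (- x) = - dot a x.
Proof. by rewrite -scaleN1r dotZ mulN1r. Qed.

Lemma dot_sum (R : realFieldType) n (a : 'rV[R]_n) (I : finType) (P : pred I) (F : I -> 'rV[R]_n) :
  dot a (\sum_(k | P k) F k) = \sum_(k | P k) dot a (F k).
Proof.
apply: (big_morph (dot a)); first by move=> x y; rewrite dotD.
by rewrite /dot big1 // => j _; rewrite mxE mulr0.
Qed.

Lemma dot_e (R : realFieldType) n (a : 'rV[R]_n) k : dot a 'e_k = a 0 k.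
Proof.
rewrite /dot (bigD1 k) //= big1 => [|j jk]; first by rewrite mxE !eqxx mulr1 addr0.
by rewrite mxE (negbTE jk) andbF mulr0.
Qed.

Lemma count_sum {V : zmodType} {n i : nat} (a b : V) : (i < n.-1)%N ->
  \sum_(k < n) (if ((i <= k) && (k < n.-1))%N then a else b) = a *+ (n.-1 - i) + b *+ i.+1.
Proof.
case: n => [|m] //= hi.
rewrite -(big_mkord xpredT (fun k : nat => if ((i <= k) && (k < m))%N then a else b)).
rewrite (@big_cat_nat _ _ _ i) //=; last by rewrite ltnW // ltnW.
rewrite (@big_cat_nat _ _ _ m i) //=; [|exact: ltnW].
rewrite big_nat1 (ltnn m) andbF.
rewrite (eq_big_nat _ _ (F2 := fun=> b)) => [|k /andP[_ hk]]; last by rewrite leqNgt hk.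
rewrite [X in _ + (X + _)](eq_big_nat _ _ (F2 := fun=> a)) => [|k /andP[hk1 hk2]]; last by rewrite hk1 hk2.
rewrite !sumr_const_nat subn0 addrA [b *+ i + _]addrC -addrA -mulrSr.
by [].
Qed.

Lemma expvec_sum (R : realFieldType) n (f : {ffun 'I_n -> 'I_n}) :
  expvec R n f = \sum_(k < n) 'e_(f k).
Proof.
apply/rowP => j; rewrite !mxE summxE.
rewrite (eq_bigr (fun k => ((f k == j) : nat)%:R)) => [|k _]; last by rewrite mxE eqxx eq_sym.
rewrite -natr_sum; congr (_%:R).
rewrite -sum1_card big_mkcond /=; apply: eq_bigr => k _; rewrite inE.
by case: (f k == j).
Qed.

Lemma cone0 (R : realFieldType) n i : in_cone R n i 0.
Proof.
exists [ffun=> 0]; split=> [f|]; first by rewrite ffunE.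
by rewrite big1 // => f _; rewrite ffunE scale0r.
Qed.

Lemma coneD (R : realFieldType) n i x y :
  in_cone R n i x -> in_cone R n i y -> in_cone R n i (x + y).
Proof.
move=> [c [c0 ->]] [d [d0 ->]].
exists [ffun f => c f + d f]; split=> [f|]; first by rewrite ffunE addr_ge0.
by rewrite -big_split; apply: eq_bigr => f _; rewrite ffunE scalerDl.
Qed.

Lemma coneZ (R : realFieldType) n i a x :
  0 <= a -> in_cone R n i x -> in_cone R n i (a *: x).
Proof.
move=> a0 [c [c0 ->]].
exists [ffun f => a * c f]; split=> [f|]; first by rewrite ffunE mulr_ge0.
by rewrite scaler_sumr; apply: eq_bigr => f _; rewrite ffunE scalerA.
Qed.

Lemma cone_sum (R : realFieldType) n i (I : finType) (P : pred I) (F : I -> 'rV[R]_n) :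
  (forall k, P k -> in_cone R n i (F k)) -> in_cone R n i (\sum_(k | P k) F k).
Proof.
move=> H; apply: (big_ind (in_cone R n i)) => //; first exact: cone0.
exact: coneD.
Qed.

Lemma cone_gen (R : realFieldType) n i f : adm n i f -> in_cone R n i (expvec R n f).
Proof.
move=> hf; exists [ffun g => (g == f)%:R]; split=> [g|]; first by rewrite ffunE ler0n.
rewrite (bigD1 f) //= big1 => [|g /andP[_ gf]]; first by rewrite ffunE eqxx scale1r addr0.
by rewrite ffunE (negbTE gf) scale0r.
Qed.

Definition fpq n i (p q : 'I_n) : {ffun 'I_n -> 'I_n} :=
  [ffun k : 'I_n => if ((i <= k) && (k < n.-1))%N then q else p].

Lemma fpq_adm n i (p q : 'I_n) : (i <= q)%N -> adm n i (fpq i p q).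
Proof.
move=> hq; apply/forallP => k; apply/implyP => hk.
by rewrite ffunE hk.
Qed.

Lemma expvec_fpq (R : realFieldType) n i (p q : 'I_n) : (i < n.-1)%N ->
  expvec R n (fpq i p q) = 'e_q *+ (n.-1 - i) + 'e_p *+ i.+1.
Proof.
move=> hi; rewrite expvec_sum -(count_sum 'e_q 'e_p hi).
by apply: eq_bigr => k _; rewrite ffunE; case: ifP.
Qed.

Lemma cone_w (R : realFieldType) n i (p q : 'I_n) : (i < n.-1)%N -> (i <= q)%N ->
  in_cone R n i ('e_q *+ (n.-1 - i) + 'e_p *+ i.+1).
Proof. by move=> hi hq; rewrite -expvec_fpq //; apply: cone_gen; apply: fpq_adm. Qed.

Lemma rank_span (R : realFieldType) n i : (i < n.-1)%N -> \rank (cone_span R n i) = n.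
Proof.
move=> hi.
have hin : (i < n)%N by rewrite (leq_trans hi) // leq_pred.
have hn0 : (n%:R : R) != 0 by rewrite pnatr_eq0 -lt0n (leq_ltn_trans (leq0n i)).
have hw : forall p q : 'I_n, (i <= q)%N ->
    (('e_q *+ (n.-1 - i) + 'e_p *+ i.+1 : 'rV[R]_n)%R <= cone_span R n i)%MS.
  move=> p q hq.
  rewrite -expvec_fpq //; apply: (sumsmx_sup (fpq i p q)).
    exact: fpq_adm.
  by rewrite genmxE.
pose q0 := Ordinal hin.
have e0 : (('e_q0 : 'rV[R]_n) <= cone_span R n i)%MS.
  have -> : ('e_q0 : 'rV[R]_n) = (n%:R)^-1 *: ('e_q0 *+ (n.-1 - i) + 'e_q0 *+ i.+1 : 'rV[R]_n).
    have hs : (n.-1 - i + i.+1 = n)%N.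
      by rewrite addnS subnK ?prednK ?(ltnW hi) // (leq_ltn_trans (leq0n i)).
    by rewrite -mulrnDr hs -scaler_nat scalerA mulVf // scale1r.
  by apply: scalemx_sub; apply: hw.
have ej : forall j : 'I_n, (('e_j : 'rV[R]_n) <= cone_span R n i)%MS.
  move=> j.
  have -> : ('e_j : 'rV[R]_n) = (i.+1%:R : R)^-1 *: (('e_q0 *+ (n.-1 - i) + 'e_j *+ i.+1) - 'e_q0 *+ (n.-1 - i) : 'rV[R]_n).
    by rewrite addrC addKr -scaler_nat scalerA mulVf ?scale1r // pnatr_eq0.
  apply: scalemx_sub; apply: addmx_sub; first exact: hw.
  by rewrite -scaler_nat -scaleNr; apply: scalemx_sub.
apply/eqP; change (row_full (cone_span R n i)); rewrite -sub1mx; apply/row_subP => j; rewrite row1; exact: ej.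
Qed.

Lemma split_sum (R : realFieldType) n (P Q : pred 'I_n) (lam : 'I_n -> 'I_n -> R) m k :
  \sum_(p | P p) \sum_(q | Q q) lam p q *: (('e_q : 'rV[R]_n) *+ m + 'e_p *+ k)
  = \sum_(p | P p) (\sum_(q | Q q) lam p q * k%:R) *: ('e_p : 'rV[R]_n)
    + \sum_(q | Q q) (\sum_(p | P p) lam p q * m%:R) *: ('e_q : 'rV[R]_n).
Proof.
under eq_bigr => p _ do under eq_bigr => q _ do rewrite scalerDr -!scaler_nat !scalerA.
under eq_bigr => p _ do rewrite big_split /=.
rewrite big_split /= addrC; congr (_ + _).
  by apply: eq_bigr => p _; rewrite scaler_suml.
by rewrite exchange_big /=; apply: eq_bigr => q _; rewrite scaler_suml.
Qed.



Lemma cone_e (R : realFieldType) n i (q : 'I_n) : (i < n.-1)%N -> (i <= q)%N ->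
  in_cone R n i ('e_q).
Proof.
move=> hi hq.
have hn0 : (n%:R : R) != 0 by rewrite pnatr_eq0 -lt0n (leq_ltn_trans (leq0n i)) // (leq_trans hi) // leq_pred.
have -> : ('e_q : 'rV[R]_n) = (n%:R)^-1 *: ('e_q *+ (n.-1 - i) + 'e_q *+ i.+1 : 'rV[R]_n).
  have hs : (n.-1 - i + i.+1 = n)%N.
    by rewrite addnS subnK ?prednK ?(ltnW hi) // (leq_ltn_trans (leq0n i)) // (leq_trans hi) // leq_pred.
  by rewrite -mulrnDr hs -scaler_nat scalerA mulVf // scale1r.
apply: coneZ; first by rewrite invr_ge0 ler0n.
exact: cone_w.
Qed.

Lemma hmn n i : (n - i - 1 = n.-1 - i)%N.
Proof. by rewrite subnAC subn1. Qed.

Lemma cone_fwd (R : realFieldType) n i (x : 'rV[R]_n) : (i < n.-1)%N ->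
  in_cone R n i x -> forall t, halfspace R n (normals R n i t) x.
Proof.
move=> hi [c [c0 ->]] t.
change (0 <= dot (normals R n i t) (\sum_(f | adm n i f) c f *: expvec R n f)).
rewrite dot_sum; apply: sumr_ge0 => f hf; rewrite dotZ; apply: mulr_ge0 => //.
case: t => [k|] /=.
  by rewrite dotC dot_e mxE ler0n.
rewrite expvec_sum dot_sum.
under eq_bigr => k _ do rewrite dot_e.
apply: (@le_trans _ _ (\sum_(k < n) (if ((i <= k) && (k < n.-1))%N then (i.+1)%:R
                                   else - ((n.-1 - i)%:R) : R))).
  by rewrite count_sum // mulNrn -!mulrnA mulnC subrr.
apply: ler_sum => k _; rewrite mxE hmn addn1.
case: ifP => hk.
  by move/forallP: hf => /(_ k) /implyP /(_ hk); rewrite leqNgt => /negbTE ->.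
by case: ifP => _ //; rewrite (le_trans _ (ler0n _ _)) // oppr_le0 ler0n.
Qed.


Lemma cone_back (R : realFieldType) n i (x : 'rV[R]_n) : (i < n.-1)%N ->
  (forall t, halfspace R n (normals R n i t) x) -> in_cone R n i x.
Proof.
move=> hi H.
have hx : forall k, 0 <= x 0 k.
  move=> k; have h : 0 <= dot ('e_k : 'rV[R]_n) x := H (Some k).
  by rewrite dotC dot_e in h.
have hnu : 0 <= dot (nu R n i) x := H None.
set m := (n.-1 - i)%N.
have hm : (0 < m)%N by rewrite subn_gt0.
pose d : R := (i.+1)%:R.
have hd : 0 < d by rewrite ltr0n.
set S1 := \sum_(j : 'I_n | (j < i)%N) x 0 j.
set S2 := \sum_(j : 'I_n | ~~ (j < i)%N) x 0 j.
have hdot : dot (nu R n i) x = - (m%:R * S1) + d * S2.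
  rewrite /dot (bigID (fun j : 'I_n => (j < i)%N)) /=; congr (_ + _).
    rewrite /S1 mulr_sumr -sumrN; apply: eq_bigr => j hj; rewrite mxE hj hmn mulNr //.
  by rewrite /S2 mulr_sumr; apply: eq_bigr => j hj; rewrite mxE (negbTE hj) addn1.
have S1ge : 0 <= S1 by apply: sumr_ge0.
have S2ge : 0 <= S2 by apply: sumr_ge0.
have key : m%:R * S1 <= d * S2 by rewrite -subr_ge0 addrC -hdot.
have hxsum : x = \sum_(p : 'I_n | (p < i)%N) x 0 p *: ('e_p : 'rV[R]_n)
                 + \sum_(q : 'I_n | ~~ (q < i)%N) x 0 q *: ('e_q : 'rV[R]_n).
  by rewrite [LHS]row_sum_delta (bigID (fun j : 'I_n => (j < i)%N)).
have [S20|S2n0] := eqVneq S2 0.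
  have S10 : S1 = 0.
    apply/eqP; rewrite eq_le S1ge andbT -(@pmulr_rle0 _ (m%:R)); last by rewrite ltr0n.
    by rewrite (le_trans key) // S20 mulr0.
  rewrite hxsum !big1 ?addr0; first exact: cone0.
    move=> q hq; rewrite (psumr_eq0P (fun j _ => hx j) S20) ?scale0r //.
  move=> p hp; rewrite (psumr_eq0P (fun j _ => hx j) S10) ?scale0r //.
have S2gt : 0 < S2 by rewrite lt_def S2n0 S2ge.
have hdS : 0 < d * S2 by rewrite mulr_gt0.
pose lam (p q : 'I_n) := x 0 p * x 0 q / (d * S2).
have hsq : forall p : 'I_n, \sum_(q : 'I_n | ~~ (q < i)%N) lam p q * d = x 0 p.
  move=> p; rewrite /lam -mulr_suml.
  under eq_bigr => q _ do rewrite mulrAC.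
  rewrite -mulr_sumr -/S2 -mulrA (mulrC S2 d) divfK //.
  by rewrite gt_eqF.
have hsp : forall q : 'I_n, \sum_(p : 'I_n | (p < i)%N) lam p q * m%:R = x 0 q * (m%:R * S1 / (d * S2)).
  move=> q; rewrite /lam -mulr_suml.
  under eq_bigr => p _ do rewrite -mulrA.
  by rewrite -mulr_suml -/S1 [LHS]mulrC [LHS]mulrA [LHS]mulrCA.
pose mu (q : 'I_n) := x 0 q - \sum_(p : 'I_n | (p < i)%N) lam p q * m%:R.
have mu0 : forall q, 0 <= mu q.
  move=> q; rewrite /mu subr_ge0 hsp; apply: ler_piMr => //.
  by rewrite ler_pdivrMr // mul1r.
have -> : x = \sum_(p : 'I_n | (p < i)%N) \sum_(q : 'I_n | ~~ (q < i)%N) lam p q *: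
                (('e_q : 'rV[R]_n) *+ m + 'e_p *+ i.+1)
              + \sum_(q : 'I_n | ~~ (q < i)%N) mu q *: ('e_q : 'rV[R]_n).
  rewrite split_sum -addrA -big_split /= [LHS]hxsum; congr (_ + _).
    by apply: eq_bigr => p _; rewrite hsq.
  by apply: eq_bigr => q _; rewrite -scalerDl /mu addrC subrK.
apply: coneD; apply: cone_sum => p hp.
  apply: cone_sum => q hq; apply: coneZ.
    by rewrite /lam divr_ge0 ?mulr_ge0 // ltW.
  by apply: cone_w => //; rewrite leqNgt.
by apply: coneZ => //; apply: cone_e => //; rewrite leqNgt.
Qed.


Lemma hsE (R : realFieldType) n (a x : 'rV[R]_n) : halfspace R n a x = (0 <= dot a x).
Proof. by []. Qed.

Unset Implicit Arguments.

Theorem lemma4p1 (R : realFieldType) (n i : nat)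
  (hn : (3 <= n)%N) (hi1 : (1 <= i)%N) (hi2 : (i <= n - 2)%N) :
  \rank (cone_span R n i) = n /\
  (forall x : 'rV[R]_n,
     in_cone R n i x <-> (forall t : option 'I_n, halfspace R n (normals R n i t) x)) /\
  (forall t : option 'I_n, exists x : 'rV[R]_n,
     (forall s : option 'I_n, s != t -> halfspace R n (normals R n i s) x) /\
     ~ in_cone R n i x).
Proof.
have hi : (i < n.-1)%N.
  by move/ssrnat.leP: hn => hn'; move/ssrnat.leP: hi2; rewrite -subn1 -!minusE => hi2'; apply/ssrnat.ltP; lia.
split; first exact: rank_span.
split; first by move=> x; split; [exact: cone_fwd | exact: cone_back].
have notin : forall x t, ~ halfspace R n (normals R n i t) x -> ~ in_cone R n i x.
  by move=> x t' h /(cone_fwd hi)/(_ t').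
have hmpos : (0 < n.-1 - i)%N by rewrite subn_gt0.
case=> [k|].
  case: (ltnP k i) => hk.
    exists (- 'e_k); split.
      case=> [s|] hs; rewrite hsE /=.
        have hs2 : (s == k) = false by apply/negbTE; apply: contraNneq hs => ->.
        by rewrite dotN dot_e mxE eq_sym hs2 andbF oppr0.
      by rewrite dotN dot_e mxE hk opprK ler0n.
    apply: (notin _ (Some k)); rewrite hsE /= dotN dot_e mxE !eqxx /=.
    by apply/negP; rewrite oppr_ge0 -ltNge ltr01.
  have [m [hm1 hm2]] : exists m : 'I_n, (i <= m)%N /\ m != k.
    have hn1 : (n.-1 < n)%N by rewrite prednK ?leqnn // (leq_trans _ hn).
    have hn2 : (n.-2 < n)%N by rewrite (leq_ltn_trans (leq_pred _) hn1).
    case: (eqVneq (val k) n.-1) => hk1.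
      exists (Ordinal hn2); split => /=; first by move/ssrnat.leP: hi2 => hi2'; apply/ssrnat.leP; rewrite -!subn1 -!minusE; rewrite -!minusE in hi2'; lia.
      apply/eqP => /(congr1 val) /=; rewrite hk1 => /eqP.
      by rewrite -subn1 -subn1 -!minusE; move/eqP; move/ssrnat.leP: hn => hn'; lia.
    by exists (Ordinal hn1); split => //=; [rewrite ltnW // | rewrite eq_sym; apply/eqP => /(congr1 val)/eqP; rewrite (negbTE hk1)].
  exists ('e_m - 'e_k); split.
    case=> [s|] hs; rewrite hsE /=.
      have hs2 : (s == k) = false by apply/negbTE; apply: contraNneq hs => ->.
      by rewrite dotD dotN !dot_e !mxE (eq_sym k) hs2 andbF subr0 ler0n.
    by rewrite dotD dotN !dot_e !mxE ltnNge hm1 ltnNge hk subrr.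
  apply: (notin _ (Some k)); rewrite hsE /= dotD dotN !dot_e !mxE !eqxx /= (negbTE hm2) add0r.
  by apply/negP; rewrite oppr_ge0 -ltNge ltr01.
have hn0 : (0 < n)%N by rewrite (leq_trans _ hn).
exists ('e_(Ordinal hn0)); split.
  case=> [s|] hs; rewrite ?eqxx // hsE /=.
  by rewrite dotC dot_e mxE ler0n.
apply: (notin _ None); rewrite hsE /= dot_e mxE /= hi1 hmn.
by apply/negP; rewrite oppr_ge0 -ltNge ltr0n.
Qed.
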